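(* Let $k\ge 5$ be an integer and let $h_2(j)=k^2j^2+(k-k^2)j+1$ for integers $j\ge0$. Then $h_2\in\mathcal H_0$, $\beta_j^5(h_2)\ge 0$ for all $0\le j\le 5$, $\beta_3^6(h_2)<0$, and $\operatorname{hdepth}(h_2)=5$.
   Context: Let $\mathcal H_0$ denote the set of functions $h:\mathbb Z_{\ge 0}\to\mathbb Z_{\ge 0}$ with $h(0)>0$. For $h\in\mathcal H_0$ and integers $0\le k\le d$, put $\beta_k^d(h)=\sum_{j=0}^k(-1)^{k-j}\binom{d-j}{k-j}h(j)$. The Hilbert depth of $h$ is $\operatorname{hdepth}(h)=\max\{d\in\mathbb Z_{\ge0}:\ \beta_k^d(h)\ge 0\text{ for all }0\le k\le d\}$; this set contains $d=0$ and is known to be bounded above by $\lfloor h(1)/h(0)\rfloor$, so the maximum exists. *)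

(* Defs.v *)
From mathcomp Require Import all_boot all_order all_algebra.
Set Implicit Arguments. Unset Strict Implicit. Unset Printing Implicit Defensive.
Import Order.TTheory GRing.Theory Num.Theory.
Local Open Scope ring_scope.

(* Functions Z_{>=0} -> Z_{>=0} are represented as int-valued functions on nat
   whose values are nonnegative; membership in H_0 additionally asks h 0 > 0. *)
Definition inH0 (h : nat -> int) : Prop := (forall j, 0 <= h j) /\ 0 < h 0%N.

Definition beta (d k : nat) (h : nat -> int) : int :=
  \sum_(0 <= j < k.+1) (-1) ^+ (k - j) * ('C(d - j, k - j))%:R * h j.

Definition hdepth_adm (h : nat -> int) (d : nat) : Prop :=
  forall k, (k <= d)%N -> 0 <= beta d k h.

Definition is_hdepth (h : nat -> int) (d : nat) : Prop :=
  hdepth_adm h d /\ forall d', hdepth_adm h d' -> (d' <= d)%N.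

Definition h2 (k : nat) (j : nat) : int :=
  (k%:Z) ^+ 2 * (j%:Z) ^+ 2 + (k%:Z - (k%:Z) ^+ 2) * j%:Z + 1.

(* Main.v *)
Require Import Defs.
From mathcomp Require Import all_boot all_order all_algebra zify ring.
Import Order.TTheory GRing.Theory Num.Theory.
Local Open Scope ring_scope.
Lemma beta_step d k h : (k < d)%N -> beta d k.+1 h = beta d.+1 k.+1 h + beta d k h.
Proof.
move=> kd; rewrite /beta !(big_nat_recr k.+1) //= !subnn !bin0.
rewrite addrAC; congr (_ + _).
rewrite -big_split /=; apply: eq_big_nat => j /andP[_ jk].
rewrite !subSn ?(leq_trans _ (ltnW kd)) // 1?ltnW // binS exprS natrD.
ring.
Qed.

Lemma adm_down h d : hdepth_adm h d.+1 -> hdepth_adm h d.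
Proof.
move=> H k; elim: k => [|k IH] kd.
  have := H 0%N isT; by rewrite /beta !big_nat1 !subn0 !bin0.
rewrite beta_step //; apply: addr_ge0; [apply: H; exact: ltnW | apply: IH; exact: ltnW].
Qed.

Lemma adm_le h d d' : (d <= d')%N -> hdepth_adm h d' -> hdepth_adm h d.
Proof.
move=> /subnK <-; elim: (d' - d)%N => [//|n IH] /= H.
by apply: IH; apply: adm_down; rewrite -addSn.
Qed.
Ltac cmpt := repeat match goal with
  | |- context[('C(?a,?b))] => let v := eval vm_compute in ('C(a,b)) in change ('C(a,b)) with v
  | |- context[((-1) ^+ (?a - ?b))] => let v := eval vm_compute in (a - b)%N in change (a - b)%N with v
  end; rewrite ?exprS ?expr0.


Theorem mainTheorem8 (k : nat) (hk : (5 <= k)%N) :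
  inH0 (h2 k) /\
  (forall j, (j <= 5)%N -> 0 <= beta 5 j (h2 k)) /\
  beta 6 3 (h2 k) < 0 /\
  is_hdepth (h2 k) 5.
Proof.
have hK : (5 <= k%:Z) by rewrite lez_nat.
have b63 : beta 6 3 (h2 k) < 0.
  rewrite /beta !big_nat_recr //= big_nil /h2 /=.
  move: hK; set K := k%:Z => hK; cmpt; nia.
have b5 : forall j, (j <= 5)%N -> 0 <= beta 5 j (h2 k).
  case=> [|[|[|[|[|[|//]]]]]] _; rewrite /beta !big_nat_recr //= big_nil /h2 /=;
  move: hK; set K := k%:Z => hK; cmpt; nia.
split; [|split; [exact: b5|split; [exact: b63|]]].
  split; last by rewrite /h2; nia.
  move=> j; rewrite /h2; case: j => [|n]; first by nia.
  have -> : (n.+1)%:Z = n%:Z + 1 by rewrite -[in LHS]addn1 PoszD.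
  have hn : (0 <= n%:Z) by [].
  move: hn hK; set N := n%:Z; set K := k%:Z => hn hK'.
  have -> : K ^+ 2 * (N + 1) ^+ 2 + (K - K ^+ 2) * (N + 1) + 1 =
    K ^+ 2 * (N * (N + 1)) + K * (N + 1) + 1 by ring.
  have hK0 : 0 <= K by apply: le_trans hK'.
  by rewrite !addr_ge0 // ?mulr_ge0 // ?exprn_ge0 // ?addr_ge0.
split; first exact: b5.
move=> d' Hd; rewrite leqNgt; apply/negP => lt5.
have := @adm_le (h2 k) 6 d' lt5 Hd 3%N isT; by rewrite leNgt b63.
Qed.
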